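(* Let $d\geq 1$ and let $F\in C^1(\mathbb{R}^d)^d$ satisfy $F(x+k)=F(x)+k$ for all $k\in\mathbb{Z}^d$ and $x\in\mathbb{R}^d$. Suppose there exists a $\mathbb{Z}^d$-periodic vector field $b\in C^1(\mathbb{R}^d)^d$ such that $F=X(1,\cdot)$, where $X$ is the flow of $b$. Then $$(\nabla F(x))\,b(x)=b(F(x))\quad\text{for all }x\in\mathbb{R}^d .$$ Moreover, for every $a\in\mathbb{R}^d$ such that $F(a)-a\in\mathbb{Z}^d$ and $\det(\nabla F(a)-I_d)\neq 0$, one has $b(a)=0_{\mathbb{R}^d}$.
   Context: For a $\mathbb{Z}^d$-periodic $b\in C^1(\mathbb{R}^d)^d$, the flow $X:\mathbb{R}\times\mathbb{R}^d\to\mathbb{R}^d$ is defined by $\partial_t X(t,x)=b(X(t,x))$, $X(0,x)=x$. $\nabla F$ denotes the Jacobian matrix of $F$ and $I_d$ the identity matrix. *)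

(* Defs.v *)
From HB Require Import structures.
From mathcomp Require Import all_boot all_order all_algebra.
From mathcomp Require Import all_classical all_reals all_analysis.
Set Implicit Arguments. Unset Strict Implicit. Unset Printing Implicit Defensive.
Import Order.TTheory GRing.Theory Num.Theory.
Import numFieldNormedType.Exports.
Local Open Scope ring_scope.

(* We use the library Jacobian derive.jacobian f p := lin1_mx ('d f p),
   which is the row-vector convention: v *m jacobian f p = 'd f p v,
   i.e. it is the transpose of the textbook matrix (dF_i/dx_j). *)

Definition C1 (R : realType) (d : nat) (F : 'rV[R]_d -> 'rV[R]_d) : Prop :=
  (forall x, differentiable F x) /\ continuous (jacobian F).

Definition zvec (R : realType) (d : nat) (k : 'rV[int]_d) : 'rV[R]_d :=
  map_mx (fun z : int => z%:~R) k.

Definition Zd_periodic (R : realType) (d : nat) (b : 'rV[R]_d -> 'rV[R]_d) :=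
  forall (k : 'rV[int]_d) (x : 'rV[R]_d), b (x + zvec R k) = b x.

Definition is_flow (R : realType) (d : nat) (b : 'rV[R]_d -> 'rV[R]_d)
  (X : R -> 'rV[R]_d -> 'rV[R]_d) : Prop :=
  (forall x, X 0 x = x) /\
  (forall (t : R) (x : 'rV[R]_d), is_derive t 1 (fun s => X s x) (b (X t x))).

(* Main.v *)
Require Import Defs.
From HB Require Import structures.
From mathcomp Require Import all_boot all_order all_algebra.
From mathcomp Require Import all_classical all_reals all_analysis.
From mathcomp Require Import lra.
Import Order.TTheory GRing.Theory Num.Theory.
Import numFieldNormedType.Exports.
Local Open Scope ring_scope.
Local Open Scope classical_set_scope.

Section S.
Variable R : realType.

Lemma ball_compact n (M : R) : compact (closed_ball_ Num.norm (0:'rV[R]_n) M).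
Proof.
apply: bounded_closed_compact; last exact: closed_closed_ball_.
rewrite /bounded_set /bounded_near.
near=> M0 => p; rewrite /closed_ball_ /= sub0r normrN => hp.
apply: le_trans hp _.
near: M0; exact: nbhs_pinfty_ge (num_real M).
Unshelve. all: by end_near. Qed.

Lemma is_derive_comp_diff (V W : normedModType R) (f : R -> V) (g : V -> W) (t : R) (df : V) :
  is_derive t (1:R) f df -> differentiable g (f t) -> is_derive t (1:R) (g \o f) ('d g (f t) df).
Proof.
move=> [fd <-] dg.
have df' : differentiable f t by apply/derivable1_diffP.
have dc : differentiable (g \o f) t by apply: differentiable_comp.
apply: DeriveDef.
 by apply/derivable1_diffP.
by rewrite (deriveE _ dc) (deriveE _ df') diff_comp.
Qed.


Lemma diff_coord m n (M v : 'M[R]_(m,n)) i j :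
  'd (fun N : 'M[R]_(m,n) => N i j : R) M v = v i j.
Proof.
have @f : {linear 'M[R]_(m, n) -> R}.
  by exists (fun N : 'M[R]_(_, _) => N i j); do 2![eexists]; do ?[constructor];
     rewrite ?mxE// => ? *; rewrite ?mxE//; move=> ?; rewrite !mxE.
rewrite (_ : (fun _ => _) = f) // diff_lin //; exact/coord_continuous.
Qed.

Lemma is_derive_coord m n (f : R -> 'M[R]_(m,n)) t df i j :
  is_derive t (1:R) f df -> is_derive t (1:R) (fun s => f s i j) (df i j).
Proof.
move=> h; have := @is_derive_comp_diff _ _ _ _ _ _ h (differentiable_coord (f t) i j).
by rewrite diff_coord.
Qed.

Lemma is_derive_seg n (p v : 'rV[R]_n) t :
  is_derive t (1:R) (fun s : R => p + s *: v) v.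
Proof.
have h1 : is_derive t (1:R) ( *:%R^~ v : R -> 'rV[R]_n) v.
  apply: DeriveDef; first exact: diff_derivable.
  by rewrite deriveE // diff_val scale1r.
have := is_deriveD (is_derive_cst p t 1) h1.
by rewrite add0r.
Qed.
Lemma entry_le m n (A : 'M[R]_(m,n)) i j : `|A i j| <= `|A|.
Proof.
rewrite [leRHS]/Num.norm /= mx_normrE.
by apply/bigmax_geP; right => /=; exists (i, j).
Qed.

Lemma mx_norm_le m n (A : 'M[R]_(m,n)) c : 0 <= c ->
  (forall i j, `|A i j| <= c) -> `|A| <= c.
Proof.
move=> c0 h; rewrite [leLHS]/Num.norm /= mx_normrE.
apply: bigmax_le => // [[i j]] _; exact: h.
Qed.

Lemma mulmx_entry_le n (u : 'rV[R]_n) (B : 'M[R]_n) i j :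
  `|(u *m B) i j| <= n%:R * (`|u| * `|B|).
Proof.
rewrite mxE; apply: le_trans (ler_norm_sum _ _ _) _.
have -> : n%:R * (`|u| * `|B|) = \sum_(k < n) (`|u| * `|B|).
  by rewrite sumr_const card_ord mulr_natl.
apply: ler_sum => k _; rewrite normrM; apply: ler_pM => //; exact: entry_le.
Qed.
Lemma dJ n (f : 'rV[R]_n -> 'rV[R]_n) x v : 'd f x v = v *m jacobian f x.
Proof. by rewrite /jacobian mul_rV_lin1. Qed.

Lemma C1_lipschitz n (b : 'rV[R]_n -> 'rV[R]_n)
  (hd : forall x, differentiable b x) (hc : continuous (jacobian b)) (M : R) :
  0 <= M -> exists L, 0 <= L /\ forall p q, `|p| <= M -> `|q| <= M ->
     `|b p - b q| <= L * `|p - q|.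
Proof.
move=> M0.
set A := closed_ball_ Num.norm (0:'rV[R]_n) M.
have inA p : `|p| <= M -> A p by rewrite /A /closed_ball_ /= sub0r normrN.
have A0 : A !=set0 by exists 0; apply: inA; rewrite normr0.
have cf : {within A, continuous (fun p => `|jacobian b p|)}.
  apply: continuous_subspaceT => p.
  apply: continuous_comp; [exact: hc | exact: norm_continuous].
have [c _ hcm] := EVT_max_rV A0 (ball_compact n M) cf.
set J := `|jacobian b c|.
have J0 : 0 <= J by rewrite /J normr_ge0.
exists (n%:R * J); split; first by rewrite mulr_ge0 // ler0n.
move=> p q hp hq.
rewrite distrC [`|p - q|]distrC.
apply: mx_norm_le; first by apply: mulr_ge0 => //; apply: mulr_ge0.
move=> i j.
pose seg := fun s : R => p + s *: (q - p).
pose phi := fun s => b (seg s) i j.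
pose dphi := fun s => ((q - p) *m jacobian b (seg s)) i j.
have dr s : is_derive s (1:R) phi (dphi s).
  have h1 := @is_derive_comp_diff _ _ _ b s _ (is_derive_seg _ p (q - p) s) (hd _).
  have h2 := @is_derive_coord _ _ _ _ _ i j h1.
  by rewrite /dphi -dJ.
have cont : {within `[0, 1], continuous phi}.
  by apply: derivable_within_continuous => x _; exact: ex_derive.
have [xi xiI eq] := MVT_segment ler01 (fun x _ => dr x) cont.
have e1 : phi 1 = b q i j by rewrite /phi /seg scale1r addrC subrK.
have e0 : phi 0 = b p i j by rewrite /phi /seg scale0r addr0.
rewrite !mxE -e1 -e0 eq subr0 mulr1 /dphi.
apply: le_trans (mulmx_entry_le _ _ _ i j) _.
rewrite -mulrA; apply: ler_wpM2l; first exact: ler0n.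
rewrite [J * _]mulrC; apply: ler_wpM2l; first exact: normr_ge0.
apply: hcm; rewrite inE; apply: inA.
have xi0 : 0 <= xi by rewrite (itvP xiI).
have xi1 : xi <= 1 by rewrite (itvP xiI).
have -> : seg xi = (1 - xi) *: p + xi *: q.
  by rewrite /seg scalerBr scalerBl scale1r addrA [RHS]addrAC.
apply: le_trans (ler_normD _ _) _.
rewrite !normrZ !ger0_norm ?subr_ge0 //.
have -> : M = (1 - xi) * M + xi * M by rewrite mulrBl mul1r subrK.
by apply: lerD; apply: ler_wpM2l => //; rewrite subr_ge0.
Qed.
Lemma ode_uniq n (b : 'rV[R]_n -> 'rV[R]_n)
  (hd : forall x, differentiable b x) (hc : continuous (jacobian b))
  (y z : R -> 'rV[R]_n) :
  (forall t, is_derive t (1:R) y (b (y t))) ->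
  (forall t, is_derive t (1:R) z (b (z t))) -> y 0 = z 0 -> y 1 = z 1.
Proof.
move=> hy hz h0.
have cy : continuous y.
  by move=> t; case: (hy t) => /derivable1_diffP /differentiable_continuous.
have cz : continuous z.
  by move=> t; case: (hz t) => /derivable1_diffP /differentiable_continuous.
have cyz : {within `[0, 1], continuous (fun t => `|y t| + `|z t|)}.
  apply: continuous_subspaceT => t; apply: cvgD.
    by apply: continuous_comp; [exact: cy | exact: norm_continuous].
  by apply: continuous_comp; [exact: cz | exact: norm_continuous].
have [c0 c0I hmax] := EVT_max ler01 cyz.
set M := `|y c0| + `|z c0|.
have M0 : 0 <= M by rewrite /M addr_ge0.
have bnd t : t \in `[0, 1]%R -> `|y t| <= M /\ `|z t| <= M.
  move=> /hmax h; split; apply: le_trans h.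
    by rewrite lerDl normr_ge0.
  by rewrite lerDr normr_ge0.
have [L [L0 hL]] := C1_lipschitz _ _ hd hc _ M0.
pose D := fun t => y t - z t.
have hD t : is_derive t (1:R) D (b (y t) - b (z t)) by apply: is_deriveB.
pose del := (2 * (L + 1))^-1.
have h2 : 0 < 2 * (L + 1) by lra.
have del0 : 0 < del by rewrite /del invr_gt0.
have Ldel : L * del < 1 by rewrite /del ltr_pdivrMr // mul1r; lra.
have step : forall k : nat, forall t, 0 <= t -> t <= 1 -> t <= k%:R * del -> D t = 0.
  elim=> [|k IH] t t0 t1 tk.
    rewrite mul0r in tk.
    have -> : t = 0 by apply: le_anti; rewrite tk t0.
    by rewrite /D h0 subrr.
  set a := k%:R * del.
  rewrite -natr1 mulrDl mul1r -/a in tk.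
  case: (leP t a) => ta; first exact: IH.
  have a0 : 0 <= a by rewrite /a mulr_ge0 // ltW.
  have Da : D a = 0.
    by apply: IH; [done | exact: le_trans (ltW ta) t1 | exact: lexx].
  have cD : {within `[a, t], continuous (fun s => `|D s|)}.
    apply: continuous_subspaceT => s; apply: continuous_comp; last exact: norm_continuous.
    by apply: cvgB; [exact: cy | exact: cz].
  have [c cI hc'] := EVT_max (ltW ta) cD.
  set m := `|D c|.
  have m0 : 0 <= m by rewrite /m normr_ge0.
  have key u : u \in `[a, t]%R -> `|D u| <= L * m * del.
    move=> uI; apply: mx_norm_le; first by rewrite mulr_ge0 // ?mulr_ge0 // ltW.
    move=> i j.
    pose phi := fun s => D s i j.
    pose dphi := fun s => (b (y s) - b (z s)) i j.
    have dr s : is_derive s (1:R) phi (dphi s) by apply: is_derive_coord.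
    have cont : {within `[a, u], continuous phi}.
      by apply: derivable_within_continuous => x _; exact: ex_derive.
    have au : a <= u by rewrite (itvP uI).
    have [xi xiI eq] := MVT_segment au (fun x _ => dr x) cont.
    have -> : D u i j = phi u - phi a by rewrite /phi Da !mxE subr0.
    rewrite eq normrM.
    have ut : u <= t by rewrite (itvP uI).
    have axi : a <= xi by rewrite (itvP xiI).
    have xiu : xi <= u by rewrite (itvP xiI).
    have xiI' : xi \in `[a, t]%R.
      by rewrite in_itv /= axi (le_trans xiu ut).
    have xi01 : xi \in `[0, 1]%R.
      by rewrite in_itv /= (le_trans a0 axi) (le_trans xiu (le_trans ut t1)).
    have [hy1 hz1] := bnd xi xi01.
    have e1 : `|dphi xi| <= L * m.
      rewrite /dphi; apply: le_trans (entry_le _ _ _ i j) _.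
      apply: le_trans (hL _ _ hy1 hz1) _.
      by apply: ler_wpM2l => //; apply: hc'.
    have e2 : `|u - a| <= del.
      rewrite ger0_norm ?subr_ge0 //.
      have := le_trans ut tk; lra.
    by apply: ler_pM => //; apply: mulr_ge0.
  have hm : m <= L * m * del by apply: key.
  have mz : m <= 0 by nra.
  have tI : t \in `[a, t]%R by rewrite in_itv /= lexx ltW.
  have : `|D t| <= 0 := le_trans (hc' t tI) mz.
  by rewrite normr_le0 => /eqP.
pose k := (Num.truncn (2 * (L + 1))).+1.
have hk : 1 <= k%:R * del.
  by rewrite /del ler_pdivlMr // mul1r; exact: ltW (truncnS_gt _).
have := step k 1 ler01 (lexx 1) hk.
by move/eqP; rewrite subr_eq0 => /eqP.
Qed.
Lemma is_derive_shift_comp (V : normedModType R) (g : R -> V) (c t : R) (dg : V) :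
  is_derive (t + c) (1:R) g dg -> is_derive t (1:R) (fun u => g (u + c)) dg.
Proof.
move=> h.
have dg' : differentiable g (t + c) by case: h => /derivable1_diffP.
have := @is_derive_comp_diff _ _ _ g t _ (@is_derive_shift R t 1 c) dg'.
by rewrite -deriveE //; case: h => _ ->.
Qed.

Lemma flow_shift d (b : 'rV[R]_d -> 'rV[R]_d) (hb : C1 b)
  (X : R -> 'rV[R]_d -> 'rV[R]_d) (hX : is_flow b X) s x :
  X 1 (X s x) = X (1 + s) x.
Proof.
case: hb => hd hc; case: hX => X0 Xd.
have := @ode_uniq _ b hd hc (fun t => X (t + s) x) (fun t => X t (X s x)).
move=> h; symmetry; apply: h.
all: try by rewrite add0r X0.
all: move=> t; first [exact: Xd | apply: is_derive_shift_comp; exact: Xd].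
Qed.
End S.

Theorem proposition2p1 (R : realType) (d : nat) (hd : (1 <= d)%N)
  (F : 'rV[R]_d -> 'rV[R]_d)
  (hF : C1 F)
  (hFper : forall (k : 'rV[int]_d) (x : 'rV[R]_d), F (x + zvec R k) = F x + zvec R k)
  (b : 'rV[R]_d -> 'rV[R]_d) (hb : C1 b) (hbper : Zd_periodic b)
  (X : R -> 'rV[R]_d -> 'rV[R]_d) (hX : is_flow b X)
  (hFX : forall x, F x = X 1 x) :
  (forall x : 'rV[R]_d, b x *m jacobian F x = b (F x)) /\
  (forall a : 'rV[R]_d,
     (exists k : 'rV[int]_d, F a - a = zvec R k) ->
     \det (jacobian F a - 1%:M) != 0 ->
     b a = 0).
Proof.
have part1 : forall x : 'rV[R]_d, b x *m jacobian F x = b (F x).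
  move=> x.
  have [X0 Xd] := hX.
  have h1 := @is_derive_comp_diff R _ _ (fun s => X s x) F 0 _ (Xd 0 x) (hF.1 _).
  rewrite X0 dJ in h1.
  have h2 : is_derive (0:R) (1:R) (fun u => X (u + 1) x) (b (X (0 + 1) x)).
    exact: is_derive_shift_comp.
  have eqf : (F \o (fun s => X s x)) = (fun u => X (u + 1) x).
    by apply/funext => u /=; rewrite hFX (flow_shift _ _ _ hb _ hX) addrC.
  rewrite eqf in h1.
  have := @derive_val _ _ _ _ _ _ _ h1.
  rewrite (@derive_val _ _ _ _ _ _ _ h2) add0r -hFX => <-.
  done.
split => // a [k hk] hdet.
have Fa : F a = a + zvec R k by rewrite -hk addrC subrK.
have e : b a *m jacobian F a = b a by rewrite part1 Fa hbper.
have e2 : b a *m (jacobian F a - 1%:M) = 0 by rewrite mulmxBr mulmx1 e subrr.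
have U : jacobian F a - 1%:M \in unitmx by rewrite unitmxE unitfE.
by rewrite -(mulmxK U (b a)) e2 mul0mx.
Qed.
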